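(* Let $T_1=\begin{pmatrix}1&1\\0&1\end{pmatrix}$ and $T_2=\begin{pmatrix}0&1\\0&1\end{pmatrix}$. Then $h(T)=0$.
   Context: Define $\gamma^{[s_j]}_{i,n}$ ($i,j\in\{1,2\}$, $n\ge0$) by $\gamma^{[s_j]}_{i,0}=1$ and for $n\ge1$ $$\gamma^{[s_1]}_{i,n}=\sum_{j,k=1}^2T_1(i,j)T_2(i,k)\,\gamma^{[s_1]}_{j,n-1}\gamma^{[s_2]}_{k,n-1},\qquad \gamma^{[s_2]}_{i,n}=\sum_{j=1}^2T_1(i,j)\,\gamma^{[s_1]}_{j,n-1}.$$ Let $l_0=1$, $l_1=2$, $l_{k+1}=l_k+l_{k-1}$, $|E_n|=\sum_{k=0}^nl_k$ (the number of elements of word length $\le n$ in the monoid $G=\langle s_1,s_2\mid s_2s_2=s_2\rangle$), and $h(T)=\limsup_{n\to\infty}\frac{\ln(\gamma^{[s_1]}_{1,n}+\gamma^{[s_1]}_{2,n})}{|E_n|}$, the paper's entropy of the $G$-vertex shift with adjacency matrices $T=(T_1,T_2)$ over $\{1,2\}$. *)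

(* Defs.v *)
From Stdlib Require Import Reals.
From Coquelicot Require Import Coquelicot.
Open Scope R_scope.

(* Indices i in {1,2} are encoded as the type bool: true = 1, false = 2. *)
Definition idx := bool.
Definition sum2 (f : idx -> nat) : nat := (f true + f false)%nat.

(* gamma T1 T2 n = (gamma^[s_1]_{.,n}, gamma^[s_2]_{.,n}) *)
Fixpoint gamma (T1 T2 : idx -> idx -> nat) (n : nat) : (idx -> nat) * (idx -> nat) :=
  match n with
  | O => (fun _ => 1%nat, fun _ => 1%nat)
  | S m =>
      let (g1, g2) := gamma T1 T2 m in
      (fun i => sum2 (fun j => sum2 (fun k => T1 i j * T2 i k * g1 j * g2 k)%nat),
       fun i => sum2 (fun j => T1 i j * g1 j)%nat)
  end.

Definition gamma1 T1 T2 (i : idx) (n : nat) : nat := fst (gamma T1 T2 n) i.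
Definition gamma2 T1 T2 (i : idx) (n : nat) : nat := snd (gamma T1 T2 n) i.

(* l_0 = 1, l_1 = 2, l_{k+1} = l_k + l_{k-1} *)
Fixpoint lpair (k : nat) : nat * nat :=
  match k with
  | O => (1%nat, 2%nat)
  | S m => let (a, b) := lpair m in (b, (a + b)%nat)
  end.
Definition l (k : nat) : nat := fst (lpair k).

Fixpoint card_E (n : nat) : nat :=
  match n with
  | O => l 0
  | S m => (card_E m + l (S m))%nat
  end.

Definition entropy_seq T1 T2 (n : nat) : R :=
  ln (INR (gamma1 T1 T2 true n + gamma1 T1 T2 false n)) / INR (card_E n).

Definition h T1 T2 : Rbar := LimSup_seq (entropy_seq T1 T2).

(* T_1 = [[1,1],[0,1]], T_2 = [[0,1],[0,1]] (row i, column j). *)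
Definition T1ex (i j : idx) : nat :=
  match i, j with true, true => 1 | true, false => 1 | false, true => 0 | false, false => 1 end%nat.
Definition T2ex (i j : idx) : nat :=
  match i, j with true, true => 0 | true, false => 1 | false, true => 0 | false, false => 1 end%nat.

(* Main.v *)
Require Import Defs.
From Stdlib Require Import Reals.
From Coquelicot Require Import Coquelicot.
From Stdlib Require Import Lia Lra.

Lemma gamma_val n :
  fst (gamma T1ex T2ex n) true = S n /\ fst (gamma T1ex T2ex n) false = 1%nat
  /\ snd (gamma T1ex T2ex n) false = 1%nat.
Proof.
  induction n as [|n IH]; [simpl; auto|].
  simpl. destruct (gamma T1ex T2ex n) as [g1 g2]. simpl in IH.
  destruct IH as [H1 [H2 H3]]. unfold sum2; simpl. rewrite H1, H2, H3. lia.
Qed.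

Lemma l_ge k : (S k <= l k)%nat /\ (S (S k) <= l (S k))%nat.
Proof.
  induction k as [|k IH]; [unfold l; simpl; lia|].
  unfold l in *. simpl in *. destruct (lpair k) as [a b]. simpl in *. lia.
Qed.

Lemma cardE_ge n : (2 * card_E n >= (S n) * (S (S n)))%nat.
Proof.
  induction n as [|n IH]; [unfold card_E, l; simpl; lia|].
  simpl card_E. pose proof (proj1 (l_ge (S n))). nia.
Qed.

Theorem proposition3 : h T1ex T2ex = Finite 0%R.
Proof.
  unfold h. apply is_LimSup_seq_unique, is_lim_LimSup_seq.
  apply is_lim_seq_le_le with (u := fun _ => 0) (w := fun n => 2 / INR (S (S n))).
  - intro n. unfold entropy_seq, gamma1.
    destruct (gamma_val n) as [H1 [H2 _]]. rewrite H1, H2.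
    pose proof (cardE_ge n) as HE.
    assert (HE' : 2 * INR (card_E n) >= INR (S n) * INR (S (S n))).
    { rewrite <- mult_INR. replace 2 with (INR 2) by (simpl; lra).
      rewrite <- mult_INR. apply Rle_ge, le_INR. lia. }
    replace (S n + 1)%nat with (S (S n)) by lia.
    assert (Hp : 0 < INR (S n)) by (apply lt_0_INR; lia).
    assert (Hq : 0 < INR (S (S n))) by (apply lt_0_INR; lia).
    assert (Hc : 0 < INR (card_E n)) by nra.
    assert (Hl0 : 0 <= ln (INR (S (S n)))).
    { rewrite <- ln_1. apply ln_le; [lra|]. rewrite S_INR. pose proof (pos_INR (S n)). lra. }
    assert (Hl : ln (INR (S (S n))) <= INR (S n)).
    { pose proof (exp_ineq1_le (INR (S (S n)) - 1)).
      assert (ln (INR (S (S n))) <= ln (exp (INR (S (S n)) - 1))) by (apply ln_le; lra).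
      rewrite ln_exp in H0. pose proof (S_INR (S n)). lra. }
    split.
    + apply Rdiv_le_0_compat; lra.
    + unfold Rdiv. apply Rmult_le_reg_r with (INR (card_E n) * INR (S (S n))); [nra|].
      field_simplify; try lra. nra.
  - apply is_lim_seq_const.
  - assert (Hi : is_lim_seq (fun n => INR (S (S n))) p_infty).
    { apply is_lim_seq_ext with (fun n => INR (n + 2)).
      { intro n. f_equal. lia. }
      apply (is_lim_seq_incr_n INR 2 p_infty), is_lim_seq_INR. }
    apply is_lim_seq_inv in Hi; [|discriminate].
    apply (is_lim_seq_scal_l _ 2) in Hi. simpl in Hi.
    replace (Finite 0) with (Rbar_mult 2 0) by (simpl; f_equal; ring).
    exact Hi.
Qed.
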